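(* Let $\mathbf d=(d_1,\dots,d_n)$ be a graphical degree sequence with $n$ even. Then $\overline{\mu}(\mathbf d)>0$ if and only if $(d_1-1,\dots,d_n-1)$ is also graphical.
   Context: All graphs are finite and simple. A sequence of nonnegative integers $(d_1,\dots,d_n)$ is graphical if some simple graph on $\{v_1,\dots,v_n\}$ has $d(v_i)=d_i$ for all $i$ (it realizes the sequence); a sequence with a negative entry is not graphical. For a graph $G=(V,E)$ on $n$ vertices, a fractional vertex cover is a function $f:V\to[0,\infty)$ with $f(u)+f(v)\ge 1$ for every edge $uv\in E$; $\tau^*(G)$ denotes the minimum of $\sum_{v\in V}f(v)$ over all fractional vertex covers. For $E'\subseteq E$ let $G-E'=(V,E\setminus E')$, and $\mu(G)=\min\{|E'| : E'\subseteq E,\ \tau^*(G-E')<n/2\}$. $\overline{\mu}(\mathbf d)$ is the maximum of $\mu(G)$ over all graphs realizing $\mathbf d$. *)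

(* Defs.v *)
From HB Require Import structures.
From mathcomp Require Import all_boot all_order all_algebra.
From mathcomp Require Import classical_sets reals.
Set Implicit Arguments. Unset Strict Implicit. Unset Printing Implicit Defensive.
Import Order.TTheory GRing.Theory Num.Theory.

(* A graph on vertex set 'I_n is given by its edge set: a set of
   2-element subsets of 'I_n (finite, simple). *)
Definition simple_graph (n : nat) (E : {set {set 'I_n}}) : bool :=
  [forall e in E, #|e| == 2].

Definition deg (n : nat) (E : {set {set 'I_n}}) (v : 'I_n) : nat :=
  #|[set e in E | v \in e]|.

Definition realizes (n : nat) (E : {set {set 'I_n}}) (d : 'I_n -> nat) : bool :=
  simple_graph E && [forall v, deg E v == d v].

Definition graphical (n : nat) (d : 'I_n -> nat) : Prop :=
  exists E : {set {set 'I_n}}, realizes E d.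

(* integer sequences: a sequence with a negative entry is not graphical *)
Definition graphicalZ (n : nat) (d : 'I_n -> int) : Prop :=
  (forall v, (0 <= d v)%R) /\ graphical (fun v => `|d v|%N).

Local Open Scope ring_scope.

Definition frac_cover (R : realType) (n : nat) (E : {set {set 'I_n}})
  (f : 'I_n -> R) : Prop :=
  (forall v, 0 <= f v) /\ (forall u v, [set u; v] \in E -> 1 <= f u + f v).

(* tau^*(G) = min of sum f over fractional covers (written as the infimum,
   which is attained) *)
Definition tau_star (R : realType) (n : nat) (E : {set {set 'I_n}}) : R :=
  inf [set s : R | exists f : 'I_n -> R, frac_cover E f /\ s = \sum_(v < n) f v].

(* mu(G) = min { |E'| : E' subset E, tau^*(G - E') < n/2 }.
   The default #|E|.+1 is only used when no such E' exists (only for n = 0),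
   playing the role of min(empty) = +infinity. *)
Definition mu (R : realType) (n : nat) (E : {set {set 'I_n}}) : nat :=
  \big[minn/#|E|.+1]_(E' : {set {set 'I_n}} |
      (E' \subset E) && (tau_star R (E :\: E') < n%:R / 2)) #|E'|.

Definition mu_bar (R : realType) (n : nat) (d : 'I_n -> nat) : nat :=
  \max_(E : {set {set 'I_n}} | realizes E d) mu R E.

(* Main.v *)
Require Import Defs.
From mathcomp Require Import all_boot all_order all_algebra.
From mathcomp Require Import classical_sets reals.
From mathcomp Require Import all_fingroup.
From mathcomp Require Import zify ring lra.
From mathcomp Require Import fintype finset.
Set Implicit Arguments. Unset Strict Implicit. Unset Printing Implicit Defensive.
Import Order.TTheory GRing.Theory Num.Theory.

Section Deg.
Variable n : nat.
Implicit Types (E F : {set {set 'I_n}}) (e : {set 'I_n}) (v : 'I_n).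

Lemma degD1 E e v : e \in E -> deg (E :\ e) v + (v \in e) = deg E v.
Proof.
move=> eE; rewrite /deg.
have -> : [set e' in E :\ e | v \in e'] = [set e' in E | v \in e'] :\ e.
  by apply/setP=> x; rewrite !inE andbA.
case: (boolP (v \in e)) => ve.
  by rewrite [in RHS](cardsD1 e) inE eE ve addnC.
rewrite addn0; apply: eq_card => x; rewrite !inE.
by case: eqP => // ->; rewrite (negbTE ve) !andbF.
Qed.

Lemma degU1 E e v : e \notin E -> deg (e |: E) v = deg E v + (v \in e).
Proof.
move=> eE; rewrite -(degD1 v (setU11 e E)).
by rewrite setU1K.
Qed.

Lemma degU E F v : (forall x, x \in E -> x \notin F) -> deg (E :|: F) v = deg E v + deg F v.
Proof.
move=> dis; rewrite /deg.
have -> : [set e in E :|: F | v \in e] = [set e in E | v \in e] :|: [set e in F | v \in e].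
  by apply/setP=> x; rewrite !inE andb_orl.
rewrite cardsU.
have -> : [set e in E | v \in e] :&: [set e in F | v \in e] = finset.set0.
  apply/setP=> x; rewrite !inE.
  case xE: (x \in E); case xF: (x \in F) => //=; last by rewrite andbF.
  by move: (dis _ xE); rewrite xF.
by rewrite cards0 subn0.
Qed.

Lemma deg_split E (P : pred {set 'I_n}) v :
  deg E v = deg [set e in E | P e] v + deg [set e in E | ~~ P e] v.
Proof.
rewrite -degU; last first.
  by move=> x; rewrite !inE => /andP[_ ->]; rewrite andbF.
congr deg; apply/setP=> x; rewrite !inE; by case: (P x); case: (x \in E).
Qed.

Lemma deg_sub E F v : E \subset F -> deg E v <= deg F v.
Proof.
move=> sEF; apply: subset_leq_card; apply/subsetP=> x; rewrite !inE.
by case/andP=> /(subsetP sEF) -> ->.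
Qed.

Lemma simple_sub E F : simple_graph F -> E \subset F -> simple_graph E.
Proof.
move=> /forall_inP sF sEF; apply/forall_inP=> e eE; exact: sF (subsetP sEF _ eE).
Qed.

Lemma simpleU E F : simple_graph E -> simple_graph F -> simple_graph (E :|: F).
Proof.
move=> /forall_inP sE /forall_inP sF; apply/forall_inP=> e; rewrite inE.
by case/orP; [apply: sE | apply: sF].
Qed.

Lemma card2 (a b : 'I_n) : a != b -> #|[set a; b]| == 2.
Proof. by move=> ab; rewrite cards2 ab. Qed.

Lemma simple_pair (a b : 'I_n) : a != b -> simple_graph [set [set a; b]].
Proof. by move=> ab; apply/forall_inP=> e; rewrite inE => /eqP ->; apply: card2. Qed.

Lemma simple_edge E (a b : 'I_n) : simple_graph E -> [set a; b] \in E -> a != b.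
Proof.
move=> /forall_inP sE /sE; apply: contraTneq => ->.
by rewrite setUid cards1.
Qed.

Lemma in2 (x a b : 'I_n) : (x \in [set a; b]) = (x == a) || (x == b).
Proof. by rewrite !inE. Qed.

Definition nb E v := [set u | [set v; u] \in E].

Lemma deg_nb E v : simple_graph E -> deg E v = #|nb E v|.
Proof.
move=> sE0; have /forall_inP sE := sE0; rewrite /deg.
have -> : [set e in E | v \in e] = [set [set v; u] | u in nb E v].
  apply/setP=> e; rewrite !inE; apply/andP/imsetP.
  - case=> eE ve; have /cards2P [a [b [ab ee]]] := sE _ eE.
    move: ve; rewrite ee !inE => /orP[] /eqP ->.
      by exists b; rewrite // inE -ee.
    by exists a; rewrite ?inE setUC -?ee.
  - by case=> u; rewrite inE => uE ->; rewrite uE !inE eqxx.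
rewrite card_in_imset // => u w; rewrite !inE => uE wE.
have vu := simple_edge sE0 uE.
move=> /setP /(_ u); rewrite !inE eqxx orbT eq_sym (negbTE vu) /=.
by move/esym/eqP.
Qed.

End Deg.

Section Kundu.
Variable n : nat.
Implicit Types (E F G H : {set {set 'I_n}}) (e : {set 'I_n}) (v : 'I_n).

Lemma swap4 (v x a y b : 'I_n): x != a -> y != b -> x != y -> a != b ->
  ((v \in [set x;a]) + (v \in [set y;b]) = (v \in [set x;y]) + (v \in [set a;b]))%N.
Proof.
move=> xa yb xy ab; rewrite !inE.
case: (eqVneq v x) => [vx|vx]; case: (eqVneq v a) => [va|va];
case: (eqVneq v y) => [vy|vy]; case: (eqVneq v b) => [vb|vb] //=;
subst; rewrite ?eqxx // in xa yb xy ab.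
Qed.

Lemma subD2 E a b : E :\ a :\ b \subset E.
Proof. by apply/subsetP=> f; rewrite !inE => /andP[_ /andP[_ ->]]. Qed.

Lemma cancel4 (A B p q r s : nat) : A + p + q = B + r + s -> r + s = p + q -> A = B.
Proof. lia. Qed.

Lemma deg_switch E e1 e2 f1 f2 v : e1 \in E -> e2 \in E -> e1 != e2 ->
  f1 \notin E -> f2 \notin E -> f1 != f2 ->
  deg ((E :\ e1 :\ e2) :|: [set f1; f2]) v + (v \in e1) + (v \in e2)
  = deg E v + (v \in f1) + (v \in f2).
Proof.
move=> e1E e2E e12 f1E f2E f12.
have -> : (E :\ e1 :\ e2) :|: [set f1; f2] = f1 |: (f2 |: (E :\ e1 :\ e2)).
  by apply/setP=> x; rewrite !inE [LHS]orbC -orbA.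
rewrite degU1; last by rewrite !inE (negbTE f1E) !andbF orbF.
rewrite degU1; last by rewrite !inE (negbTE f2E) !andbF.
have e2E' : e2 \in E :\ e1 by rewrite !inE eq_sym e12.
rewrite -[in RHS](degD1 v e1E) -[in RHS](degD1 v e2E'); lia.
Qed.

Lemma simple_pair2 (a b c d : 'I_n) : a != b -> c != d ->
  simple_graph [set [set a; b]; [set c; d]].
Proof.
by move=> ab cd; apply/forall_inP=> e; rewrite !inE => /orP[] /eqP ->; apply: card2.
Qed.

Lemma edge_other E e x : simple_graph E -> e \in E -> x \in e ->
  exists y, x != y /\ e = [set x; y].
Proof.
move=> /forall_inP sE eE xe; have /cards2P [a [b [ab ee]]] := sE _ eE.
move: xe; rewrite ee !inE => /orP[] /eqP ->.
  by exists b.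
by exists a; rewrite eq_sym ab setUC.
Qed.

Lemma deg_pos_edge E v : 0 < deg E v -> exists2 e, e \in E & v \in e.
Proof.
rewrite /deg card_gt0 => /set0Pn [e]; rewrite inE => /andP[]; by exists e.
Qed.

Lemma deg_GH G H v : deg G v = deg (G :&: H) v + deg (G :\: H) v.
Proof.
rewrite (deg_split G (fun e => e \in H)); congr (deg _ _ + deg _ _);
by apply/setP=> x; rewrite !inE andbC.
Qed.

Lemma kundu_aux k G H : #|H :\: G| < k -> simple_graph G -> simple_graph H ->
  (forall v, deg G v = (deg H v).+1) ->
  exists G' H', [/\ simple_graph G', simple_graph H',
   (forall v, deg G' v = deg G v), (forall v, deg H' v = deg H v) & H' \subset G'].
Proof.
elim: k G H => // k IH G H hk sG sH dGH.
case: (boolP (H \subset G)) => [HG|nHG]; first by exists G, H.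
have sR : simple_graph (G :\: H) by apply: simple_sub sG (subsetDl _ _).
have sB : simple_graph (H :\: G) by apply: simple_sub sH (subsetDl _ _).
pose r v := deg (G :\: H) v.
have rb v : r v = (deg (H :\: G) v).+1.
  move: (dGH v); rewrite (deg_GH G H) (deg_GH H G) setIC /r; lia.
pose P := [set x | [exists e in H :\: G, x \in e]].
have [x0 Px0] : exists x0, x0 \in P.
  have [e eH eG] : exists2 e, e \in H & e \notin G.
    by move/subsetPn: nHG => [e] *; exists e.
  have /card_gt0P [x0 xe] : 0 < #|e| by have /forall_inP := sH; move/(_ e eH)/eqP ->.
  by exists x0; rewrite inE; apply/existsP; exists e; rewrite !inE eH eG.
case: (@arg_maxnP _ x0 (fun i => i \in P) r Px0) => x Px xmax.
move: Px; rewrite /= inE => /exists_inP [e eB xe].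
have [y [xy ee]] := edge_other sB eB xe; subst e.
have /deg_pos_edge [e' eR ye'] : 0 < deg (G :\: H) y by rewrite -/(r y) rb.
have [bb [ybb ee']] := edge_other sR eR ye'; subst e'.
move: eB eR; rewrite !inE => /andP [xyG xyH] /andP [ybbH ybbG].
have bbx : bb != x.
  by apply: contraNneq xyG => bx; rewrite -bx setUC.
have [[a [aR abb nab]] | all_red] :
  (exists a, [/\ a \in nb (G :\: H) x, a != bb & [set a; bb] \notin G :\: H]) \/
  (forall a, a \in nb (G :\: H) x -> a != bb -> [set a; bb] \in G :\: H).
- case: (boolP [exists a, [&& a \in nb (G :\: H) x, a != bb & [set a; bb] \notin G :\: H]]).
    by move/existsP=> [a /and3P [? ? ?]]; left; exists a.
  move=> /existsPn h; right=> a aR abb; move: (h a); rewrite aR abb /=.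
  by rewrite negbK.
- move: aR; rewrite inE !inE => /andP [xaH xaG].
  have xa : x != a by apply: simple_edge sG xaG.
  have xy' : x != y := xy.
  case: (boolP ([set a; bb] \in G)) => abG.
  +
    have abH : [set a; bb] \in H by move: nab; rewrite !inE abG andbT negbK.
    pose H' := (H :\ [set x; y] :\ [set a; bb]) :|: [set [set x; a]; [set y; bb]].
    have e12 : [set x; y] != [set a; bb].
      apply/negP=> /eqP /setP /(_ x); rewrite !inE eqxx /=.
      by rewrite (negbTE xa) eq_sym (negbTE bbx).
    have f12 : [set x; a] != [set y; bb].
      apply/negP=> /eqP /setP /(_ x); rewrite !inE eqxx /=.
      by rewrite (negbTE xy) eq_sym (negbTE bbx).
    have dH' v : deg H' v = deg H v.
      have := deg_switch v xyH abH e12 xaH ybbH f12.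
      move=> h; apply: cancel4 h _; exact: swap4.
    have sH' : simple_graph H'.
      apply: simpleU; first by apply: simple_sub sH (subD2 _ _ _).
      by apply: simple_pair2; rewrite // eq_sym.
    have hk' : #|H' :\: G| < k.
      have sub : H' :\: G \subset (H :\: G) :\ [set x; y].
        apply/subsetP=> f; rewrite !inE => /andP [fG].
        case/orP=> [/andP [fab /andP [fxy fH]] | /orP [] /eqP fe].
        * by rewrite fxy fG fH.
        * by move: fG; rewrite fe xaG.
        * by move: fG; rewrite fe ybbG.
      apply: leq_ltn_trans (subset_leq_card sub) _.
      have xyB : [set x; y] \in H :\: G by rewrite !inE xyH xyG.
      by move: hk; rewrite (cardsD1 [set x; y] (H :\: G)) xyB add1n ltnS.
    have [G2 [H2 [sG2 sH2 dG2 dH2 sub2]]] := IH G H' hk' sG sH' (fun v => etrans (dGH v) (congr1 S (esym (dH' v)))).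
    by exists G2, H2; split=> // v; rewrite dH2 dH'.
  +
    pose G' := (G :\ [set x; a] :\ [set y; bb]) :|: [set [set x; y]; [set a; bb]].
    have e12 : [set x; a] != [set y; bb].
      apply/negP=> /eqP /setP /(_ x); rewrite !inE eqxx /=.
      by rewrite (negbTE xy) eq_sym (negbTE bbx).
    have f12 : [set x; y] != [set a; bb].
      apply/negP=> /eqP /setP /(_ x); rewrite !inE eqxx /=.
      by rewrite (negbTE xa) eq_sym (negbTE bbx).
    have dG' v : deg G' v = deg G v.
      have := deg_switch v xaG ybbG e12 xyG abG f12.
      move=> h; apply: cancel4 h _; apply/esym; exact: swap4.
    have sG' : simple_graph G'.
      apply: simpleU; first by apply: simple_sub sG (subD2 _ _ _).
      by apply: simple_pair2.
    have hk' : #|H :\: G'| < k.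
      have sub : H :\: G' \subset (H :\: G) :\ [set x; y].
        apply/subsetP=> f; rewrite !inE => /andP [hG' fH].
        move: hG'; rewrite negb_or => /andP [h1]; rewrite negb_or => /andP [fxy fab].
        have fG : f \notin G.
          apply/negP=> fG; move: h1; rewrite fG andbT negb_and !negbK.
          by case/orP=> /eqP fe; move: fH; rewrite fe; [rewrite (negbTE ybbH) | rewrite (negbTE xaH)].
        by rewrite fxy fG fH.
      apply: leq_ltn_trans (subset_leq_card sub) _.
      have xyB : [set x; y] \in H :\: G by rewrite !inE xyH xyG.
      by move: hk; rewrite (cardsD1 [set x; y] (H :\: G)) xyB add1n ltnS.
    have [G2 [H2 [sG2 sH2 dG2 dH2 sub2]]] := IH G' H hk' sG' sH (fun v => etrans (dG' v) (dGH v)).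
    by exists G2, H2; split=> // v; rewrite dG2 dG'.
-
  exfalso.
  have rlt : r x < r bb.
    rewrite /r (deg_nb _ sR) (deg_nb _ sR).
    set Rx := nb (G :\: H) x.
    have yRx : y \notin Rx by rewrite !inE (negbTE xyG) andbF.
    have xRx : x \notin Rx.
      rewrite !inE; apply/negP=> /andP[_ h]; have := simple_edge sG h.
      by rewrite eqxx.
    case: (boolP (bb \in Rx)) => bbR.
    + have sub : x |: (y |: (Rx :\ bb)) \subset nb (G :\: H) bb.
        apply/subsetP=> z; rewrite !in_setU1 in_setD1 => /orP [/eqP -> | /orP [/eqP -> | /andP [zb zR]]].
        * by move: bbR; rewrite !inE setUC.
        * by rewrite !inE setUC ybbH ybbG.
        * by move: (all_red z zR zb); rewrite setUC !inE.
      apply: leq_trans _ (subset_leq_card sub).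
      rewrite cardsU1 cardsU1 in_setU1 in_setD1 negb_or xy /= (negbTE xRx) andbF /=.
      rewrite in_setD1 (negbTE yRx) andbF /= (cardsD1 bb Rx) bbR /= !add1n ltnS; exact: ltnSn.
    + have sub : y |: Rx \subset nb (G :\: H) bb.
        apply/subsetP=> z; rewrite !in_setU1 => /orP [/eqP -> | zR].
        * by rewrite !inE setUC ybbH ybbG.
        * have zb : z != bb by apply: contraNneq bbR => <-.
          by move: (all_red z zR zb); rewrite setUC !inE.
      apply: leq_trans _ (subset_leq_card sub).
      by rewrite cardsU1 yRx /= add1n ltnSn.
  have bbP : bb \in P.
    have : 0 < deg (H :\: G) bb by move: rlt; rewrite (rb bb) (rb x) ltnS; apply: leq_ltn_trans (leq0n _).
    move/deg_pos_edge=> [e eB bbe]; rewrite inE; apply/exists_inP; by exists e.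
  by have := xmax _ bbP; rewrite /= leqNgt rlt.
Qed.
End Kundu.

Section Hall.
Variable T : finType.

Lemma bigcupD (Y : {set T}) (F : T -> {set T}) (B : {set T}) :
  \bigcup_(y in Y) (F y :\: B) = (\bigcup_(y in Y) F y) :\: B.
Proof.
apply/setP=> z; rewrite inE; apply/bigcupP/andP.
- by case=> y yY; rewrite inE => /andP [zB zF]; split=> //; apply/bigcupP; exists y.
- by case=> zB /bigcupP [y yY zF]; exists y; rewrite // inE zB.
Qed.

Lemma hall_aux k (A : {set T}) (N : T -> {set T}) : #|A| < k ->
  (forall X : {set T}, X \subset A -> #|X| <= #|\bigcup_(x in X) N x|) ->
  exists f : T -> T, (forall x y, x \in A -> y \in A -> f x = f y -> x = y) /\ (forall x, x \in A -> f x \in N x).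
Proof.
elim: k A N => // k IH A N hk hall.
case: (set_0Vmem A) => [-> | [a aA]].
  by exists id; split=> // x; rewrite inE.
case: (boolP [exists X : {set T}, [&& X \subset A, X != set0, X != A &
                   #|\bigcup_(x in X) N x| <= #|X|]]).
- move=> /existsP [X /and4P [XA X0 XnA tight]].
  have ltX : #|X| < #|A| by apply: proper_card; rewrite properEneq XnA XA.
  have [f1 [inj1 N1]] : exists f : T -> T, (forall x y, x \in X -> y \in X -> f x = f y -> x = y) /\ (forall x, x \in X -> f x \in N x).
    apply: IH; first by apply: leq_trans ltX _.
    by move=> Y YX; apply: hall; apply: subset_trans YX XA.
  set NX := \bigcup_(x in X) N x.
  have [f2 [inj2 N2]] : exists f : T -> T, (forall x y, x \in A :\: X -> y \in A :\: X -> f x = f y -> x = y) /\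
                       (forall x, x \in A :\: X -> f x \in N x :\: NX).
    apply: IH.
      rewrite cardsDS //; move: hk; have : 0 < #|X| by rewrite card_gt0.
      move: ltX; lia.
    move=> Y YAX; rewrite bigcupD.
    have YXA : Y :|: X \subset A.
      by rewrite subUset XA andbT; apply: subset_trans YAX (subsetDl _ _).
    have := hall _ YXA; rewrite bigcup_setU -/NX.
    have YX0 : Y :&: X = set0.
      apply/setP=> z; rewrite !inE; apply/negP=> /andP [zY zX].
      by move: (subsetP YAX _ zY); rewrite inE zX.
    rewrite cardsU YX0 cards0 subn0.
    set UY := \bigcup_(y in Y) N y.
    rewrite cardsU cardsD.
    have i1 : #|UY :&: NX| <= #|UY| by apply: subset_leq_card; apply: subsetIl.
    move: tight i1; rewrite -/NX; lia.
  exists (fun x => if x \in X then f1 x else f2 x); split.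
  + move=> x y xA yA /=.
    case xX: (x \in X); case yX: (y \in X).
    * exact: inj1.
    * move=> e; have := N2 y; rewrite !inE yX yA => /(_ isT); rewrite -e => /andP [].
      by move/negP; case; apply/bigcupP; exists x => //; apply: N1.
    * move=> e; have := N2 x; rewrite !inE xX xA => /(_ isT); rewrite e => /andP [].
      by move/negP; case; apply/bigcupP; exists y => //; apply: N1.
    * by apply: inj2; rewrite inE ?xX ?yX.
  + move=> x xA /=; case xX: (x \in X); first exact: N1.
    by have := N2 x; rewrite !inE xX xA => /(_ isT) /andP [].
- move=> /existsPn noT.
  have strict (X : {set T}) : X \subset A -> X != set0 -> X != A -> #|X| < #|\bigcup_(x in X) N x|.
    move=> XA X0 XnA; move: (noT X); rewrite XA X0 XnA /= ltnNge; done.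
  have [b bN] : exists b, b \in N a.
    have := hall [set a]; rewrite sub1set aA big_set1 => /(_ isT).
    by rewrite cards1 card_gt0 => /set0Pn.
  have [f' [inj' N']] : exists f : T -> T, (forall x y, x \in A :\ a -> y \in A :\ a -> f x = f y -> x = y) /\
                       (forall x, x \in A :\ a -> f x \in N x :\ b).
    apply: IH.
      by move: hk; rewrite (cardsD1 a A) aA; lia.
    move=> Y YA; rewrite bigcupD.
    case: (set_0Vmem Y) => [-> | [y yY]]; first by rewrite cards0.
    have YA' : Y \subset A by apply: subset_trans YA (subsetDl _ _).
    have YnA : Y != A.
      apply/negP=> /eqP eY; move: (subsetP YA a); rewrite eY aA !inE eqxx /=.
      by move/(_ isT).
    have Y0 : Y != set0 by apply/set0Pn; exists y.
    have := strict _ YA' Y0 YnA.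
    rewrite (cardsD1 b (\bigcup_(x in Y) N x)); case: (b \in _); lia.
  exists (fun x => if x == a then b else f' x); split.
  + move=> x y xA yA /=.
    case: (eqVneq x a) => [-> | xa]; case: (eqVneq y a) => [-> | ya] //.
    * by move=> e; have := N' y; rewrite !inE ya yA => /(_ isT); rewrite -e eqxx.
    * by move=> e; have := N' x; rewrite !inE xa xA => /(_ isT); rewrite e eqxx.
    * by apply: inj'; rewrite !inE ?xa ?ya.
  + move=> x xA /=; case: (eqVneq x a) => [-> | xa] //.
    by have := N' x; rewrite !inE xa xA => /(_ isT) /andP [].
Qed.

Lemma hall (N : T -> {set T}) :
  (forall X : {set T}, #|X| <= #|\bigcup_(x in X) N x|) ->
  exists f : T -> T, injective f /\ (forall x, f x \in N x).
Proof.
move=> h; have [f [inj fN]] := @hall_aux #|[set: T]|.+1 [set: T] N (ltnSn _) (fun X _ => h X).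
by exists f; split=> [x y|x]; [apply: inj; rewrite inE | apply: fN; rewrite inE].
Qed.
End Hall.

Ltac gen_lia := repeat match goal with |- context [deg ?E ?x] => generalize (deg E x) end; clear; intros; lia.

Section Reduce.
Variable n : nat.
Implicit Types (E G H K : {set {set 'I_n}}) (W : {set 'I_n}) (e : {set 'I_n}).

Definition onW W E := forall e, e \in E -> e \subset W.

Definition P_ok W G := exists H,
  [/\ simple_graph H, onW W H & forall x, x \in W -> (deg H x).+1 = deg G x].

Lemma notin2 (x a b : 'I_n) : x != a -> x != b -> x \notin [set a; b].
Proof. by rewrite !inE negb_or => -> ->. Qed.

Lemma inW2 W (x a b : 'I_n) : (x \in W :\ a :\ b) = [&& x != b, x != a & x \in W].
Proof. by rewrite !inE. Qed.

Lemma subW2 W (a b : 'I_n) : W :\ a :\ b \subset W.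
Proof. by apply/subsetP=> f; rewrite !inE => /andP[_ /andP[_ ->]]. Qed.

Lemma deg0 E x : (forall e, e \in E -> x \notin e) -> deg E x = 0.
Proof.
move=> h; apply/eqP; rewrite cards_eq0; apply/eqP/setP=> e; rewrite !inE.
by apply/negP=> /andP [/h /negP].
Qed.

Lemma sep_sub E (P : pred {set 'I_n}) : [set e in E | P e] \subset E.
Proof. by apply/subsetP=> e; rewrite inE => /andP []. Qed.

Definition G0 G (v w : 'I_n) := [set e in G | (v \notin e) && (w \notin e)].
Definition T0 G (v w : 'I_n) := [set e in G | (v \in e) || (w \in e)].

Lemma split_vw G v w x : deg G x = deg (G0 G v w) x + deg (T0 G v w) x.
Proof.
rewrite (deg_split G (fun e => (v \notin e) && (w \notin e))); congr (_ + deg _ _).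
by apply/setP=> e; rewrite !inE negb_and !negbK.
Qed.

Lemma G0v G v w : deg (G0 G v w) v = 0.
Proof. by apply: deg0=> e; rewrite inE => /and3P []. Qed.

Lemma G0w G v w : deg (G0 G v w) w = 0.
Proof. by apply: deg0=> e; rewrite inE => /and3P []. Qed.

Lemma onW_G0 W G v w : onW W G -> onW (W :\ v :\ w) (G0 G v w).
Proof.
move=> oG e; rewrite inE => /and3P [eG ve we]; apply/subsetP=> x xe.
rewrite !inE (subsetP (oG _ eG) _ xe) andbT.
by apply/andP; split; apply/eqP=> ex; [move: we | move: ve]; rewrite -ex xe.
Qed.

Lemma step W G v w G' K : v \in W -> w \in W -> v != w ->
  simple_graph G' -> onW (W :\ v :\ w) G' ->
  simple_graph K -> onW W K -> (forall e, e \in K -> (v \in e) || (w \in e)) ->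
  (forall x, x \in W :\ v :\ w -> deg G' x + deg K x = deg G x) ->
  (deg K v).+1 = deg G v -> (deg K w).+1 = deg G w ->
  P_ok (W :\ v :\ w) G' -> P_ok W G.
Proof.
move=> vW wW vw sG' oG' sK oK Kvw dx dv dw [H' [sH' oH' dH']].
have disj e : e \in H' -> e \notin K.
  move=> eH'; apply/negP=> /Kvw; have sub := oH' _ eH'.
  by case/orP=> xe; have := subsetP sub _ xe; rewrite !inE eqxx /= ?andbF.
have H'0 x : x \notin W :\ v :\ w -> deg H' x = 0.
  move=> xW; apply: deg0 => e eH'; apply: contra xW; exact: (subsetP (oH' _ eH')).
exists (H' :|: K); split.
- exact: simpleU.
- move=> e; rewrite inE => /orP [/oH' sub | /oK //].
  exact: subset_trans sub (subW2 _ _ _).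
- move=> x xW; rewrite degU //; case: (boolP (x \in W :\ v :\ w)) => xW'.
  + by rewrite -addSn (dH' _ xW') dx.
  + rewrite H'0 // add0n; move: xW'; rewrite inW2 xW andbT negb_and !negbK.
    by case/orP=> /eqP ->.
Qed.

Lemma in_W2_2 W (x a b : 'I_n) : x \in W :\ a :\ b -> (x \in [set a; b]) = false.
Proof. by rewrite inW2 !inE => /and3P [xb xa _]; rewrite (negbTE xa) (negbTE xb). Qed.

Lemma move1 W G a b : simple_graph G -> onW W G -> [set a; b] \in G -> a != b ->
  a \in W -> b \in W -> P_ok (W :\ a :\ b) (G0 G a b) -> P_ok W G.
Proof.
move=> sG oG abG ab aW bW ok.
have abT : [set a; b] \in T0 G a b by rewrite inE abG !inE eqxx.
apply: (@step W G a b (G0 G a b) (T0 G a b :\ [set a; b]) aW bW ab _ _ _ _ _ _ _ _ ok) => //.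
- exact: simple_sub sG (sep_sub _ _).
- exact: onW_G0.
- exact: simple_sub sG (subset_trans (subsetDl _ _) (sep_sub _ _)).
- by move=> e; rewrite !inE => /andP [_ /andP [/oG sub _]].
- by move=> e; rewrite !inE => /andP [_ /andP [_ ->]].
- move=> x xW; have := degD1 x abT; rewrite (in_W2_2 xW) addn0 => ->.
  by rewrite -split_vw.
- by have := degD1 a abT; rewrite (split_vw G a b) G0v !inE eqxx => <-; rewrite addn1.
- by have := degD1 b abT; rewrite (split_vw G a b) G0w !inE eqxx orbT => <-; rewrite addn1.
Qed.


Lemma pair_neq (a b c d : 'I_n) : a != c -> a != d -> [set a; b] != [set c; d].
Proof.
move=> ac ad; apply/negP=> /eqP e; have : a \in [set c; d] by rewrite -e !inE eqxx.
by rewrite !inE (negbTE ac) (negbTE ad).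
Qed.

Lemma subW2_pair W (a b v w : 'I_n) : a \in W :\ v :\ w -> b \in W :\ v :\ w ->
  [set a; b] \subset W :\ v :\ w.
Proof. by move=> aW bW; apply/subsetP=> x; rewrite in_set2 => /orP [] /eqP ->. Qed.

Lemma move2 W G v w u z : simple_graph G -> onW W G -> [set u; v] \in G -> [set w; z] \in G ->
  v != w -> v \in W -> w \in W -> u \in W :\ v :\ w -> z \in W :\ v :\ w -> u != z ->
  [set u; z] \notin G -> P_ok (W :\ v :\ w) ([set u; z] |: G0 G v w) -> P_ok W G.
Proof.
move=> sG oG uvG wzG vw vW wW uW zW uz uzG ok.
have [uw uv] : u != w /\ u != v by move: uW; rewrite inW2 => /and3P [? ? _]; split.
have [zw zv] : z != w /\ z != v by move: zW; rewrite inW2 => /and3P [? ? _]; split.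
have uvT : [set u; v] \in T0 G v w by rewrite inE uvG !inE eqxx orbT.
have wzT : [set w; z] \in T0 G v w :\ [set u; v].
  by rewrite in_setD1 pair_neq 1?eq_sym //= inE wzG !inE eqxx orbT.
have uzG0 : [set u; z] \notin G0 G v w by rewrite inE (negbTE uzG).
apply: (@step W G v w _ (T0 G v w :\ [set u; v] :\ [set w; z]) vW wW vw _ _ _ _ _ _ _ _ ok).
- apply: simpleU; first exact: simple_pair.
  exact: simple_sub sG (sep_sub _ _).
- move=> e; rewrite in_setU1 => /orP [/eqP -> | ]; first exact: subW2_pair.
  exact: onW_G0.
- exact: simple_sub sG (subset_trans (subsetDl _ _) (subset_trans (subsetDl _ _) (sep_sub _ _))).
- by move=> e; rewrite !in_setD1 inE => /andP [_ /andP [_ /andP [/oG sub _]]].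
- by move=> e; rewrite !in_setD1 inE => /andP [_ /andP [_ /andP [_ ->]]].
- move=> x xW; have [xw xv] : x != w /\ x != v by move: xW; rewrite inW2 => /and3P [? ? _]; split.
  have e1 : deg (T0 G v w :\ [set u; v] :\ [set w; z]) x + (x \in [set w; z]) =
    deg (T0 G v w :\ [set u; v]) x := degD1 x wzT.
  have e2 : deg (T0 G v w :\ [set u; v]) x + (x \in [set u; v]) = deg (T0 G v w) x := degD1 x uvT.
  rewrite degU1 // (split_vw G v w x) -e2 -e1.
  rewrite !inE (negbTE xw) (negbTE xv) /=.
  case: (eqVneq x u) => [xu | xu] /=.
    by rewrite xu (negbTE uz) /=; gen_lia.
  by case: (x == z) => /=; gen_lia.
- have e1 : deg (T0 G v w :\ [set u; v] :\ [set w; z]) v + (v \in [set w; z]) =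
    deg (T0 G v w :\ [set u; v]) v := degD1 v wzT.
  have e2 : deg (T0 G v w :\ [set u; v]) v + (v \in [set u; v]) = deg (T0 G v w) v := degD1 v uvT.
  rewrite (split_vw G v w v) G0v -e2 -e1 !inE (negbTE vw) eqxx orbT /=.
  by rewrite eq_sym (negbTE zv) /=; gen_lia.
- have e1 : deg (T0 G v w :\ [set u; v] :\ [set w; z]) w + (w \in [set w; z]) =
    deg (T0 G v w :\ [set u; v]) w := degD1 w wzT.
  have e2 : deg (T0 G v w :\ [set u; v]) w + (w \in [set u; v]) = deg (T0 G v w) w := degD1 w uvT.
  rewrite (split_vw G v w w) G0w -e2 -e1 !inE eqxx /=.
  by rewrite eq_sym (negbTE uw) eq_sym (negbTE vw) /=; gen_lia.
Qed.

Lemma move3 W G v w u p q : simple_graph G -> onW W G ->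
  [set u; v] \in G -> [set u; w] \in G -> [set p; q] \in G ->
  v != w -> v \in W -> w \in W -> u \in W :\ v :\ w -> p \in W :\ v :\ w ->
  q \in W :\ v :\ w -> u != p -> u != q -> p != q ->
  [set u; p] \notin G -> [set u; q] \notin G ->
  P_ok (W :\ v :\ w) ([set u; p] |: ([set u; q] |: (G0 G v w :\ [set p; q]))) ->
  P_ok W G.
Proof.
move=> sG oG uvG uwG pqG vw vW wW uW pW qW up uq pq upG uqG ok.
have [uw uv] : u != w /\ u != v by move: uW; rewrite inW2 => /and3P [? ? _]; split.
have [pw pv] : p != w /\ p != v by move: pW; rewrite inW2 => /and3P [? ? _]; split.
have [qw qv] : q != w /\ q != v by move: qW; rewrite inW2 => /and3P [? ? _]; split.
have uvT : [set u; v] \in T0 G v w by rewrite inE uvG !inE eqxx orbT.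
have uwT : [set u; w] \in T0 G v w :\ [set u; v].
  have uwuv : [set u; w] != [set u; v].
    by rewrite setUC [[set u; v]]setUC; apply: pair_neq; rewrite eq_sym.
  by rewrite in_setD1 uwuv inE uwG !inE eqxx !orbT.
have pqG0 : [set p; q] \in G0 G v w.
  by rewrite inE pqG notin2 1?eq_sym // notin2 1?eq_sym.
have uqG0 : [set u; q] \notin G0 G v w :\ [set p; q].
  by rewrite in_setD1 inE (negbTE uqG) !andbF.
have upG0 : [set u; p] \notin [set u; q] |: (G0 G v w :\ [set p; q]).
  rewrite in_setU1 negb_or in_setD1 inE (negbTE upG) /= !andbF andbT.
  apply/negP=> /eqP /setP /(_ p); rewrite !inE eqxx orbT.
  by rewrite eq_sym (negbTE up) (negbTE pq).
apply: (@step W G v w _ (T0 G v w :\ [set u; v] :\ [set u; w]) vW wW vw _ _ _ _ _ _ _ _ ok).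
- apply: simpleU; first exact: simple_pair.
  apply: simpleU; first exact: simple_pair.
  exact: simple_sub sG (subset_trans (subsetDl _ _) (sep_sub _ _)).
- move=> e; rewrite !in_setU1 => /orP [/eqP -> | /orP [/eqP -> | ]].
  + exact: subW2_pair.
  + exact: subW2_pair.
  + by rewrite in_setD1 => /andP [_]; apply: onW_G0.
- exact: simple_sub sG (subset_trans (subsetDl _ _) (subset_trans (subsetDl _ _) (sep_sub _ _))).
- by move=> e; rewrite !in_setD1 inE => /andP [_ /andP [_ /andP [/oG sub _]]].
- by move=> e; rewrite !in_setD1 inE => /andP [_ /andP [_ /andP [_ ->]]].
- move=> x xW; have [xw xv] : x != w /\ x != v by move: xW; rewrite inW2 => /and3P [? ? _]; split.
  have e1 : deg (T0 G v w :\ [set u; v] :\ [set u; w]) x + (x \in [set u; w]) =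
    deg (T0 G v w :\ [set u; v]) x := degD1 x uwT.
  have e2 : deg (T0 G v w :\ [set u; v]) x + (x \in [set u; v]) = deg (T0 G v w) x := degD1 x uvT.
  have e3 : deg (G0 G v w :\ [set p; q]) x + (x \in [set p; q]) = deg (G0 G v w) x := degD1 x pqG0.
  rewrite degU1 // degU1 // (split_vw G v w x) -e2 -e1 -e3.
  rewrite !inE (negbTE xw) (negbTE xv) /=.
  case: (eqVneq x u) => [xu | xu] /=.
    by rewrite xu (negbTE up) (negbTE uq) /=; gen_lia.
  case: (eqVneq x p) => [xp | xp]; case: (eqVneq x q) => [xq | xq] /=; try gen_lia.
  by move: pq; rewrite -xp -xq eqxx.
- have e1 : deg (T0 G v w :\ [set u; v] :\ [set u; w]) v + (v \in [set u; w]) =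
    deg (T0 G v w :\ [set u; v]) v := degD1 v uwT.
  have e2 : deg (T0 G v w :\ [set u; v]) v + (v \in [set u; v]) = deg (T0 G v w) v := degD1 v uvT.
  rewrite (split_vw G v w v) G0v -e2 -e1 !inE (negbTE vw) eqxx orbT /=.
  by rewrite eq_sym (negbTE uv) /=; gen_lia.
- have e1 : deg (T0 G v w :\ [set u; v] :\ [set u; w]) w + (w \in [set u; w]) =
    deg (T0 G v w :\ [set u; v]) w := degD1 w uwT.
  have e2 : deg (T0 G v w :\ [set u; v]) w + (w \in [set u; v]) = deg (T0 G v w) w := degD1 w uvT.
  rewrite (split_vw G v w w) G0w -e2 -e1 !inE eqxx /=.
  by rewrite eq_sym (negbTE uw) eq_sym (negbTE vw) /=; gen_lia.
Qed.

Lemma inG0 G (a b x y : 'I_n) : [set x; y] \in G -> a != x -> a != y -> b != x -> b != y ->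
  [set x; y] \in G0 G a b.
Proof. by move=> h *; rewrite inE h notin2 // notin2. Qed.

Ltac neq := solve [ assumption | rewrite eq_sym; assumption ].

Lemma reduce_aux k W G (s : {perm 'I_n}) : #|W| < k -> simple_graph G -> onW W G ->
  (forall x, x \in W -> [set x; s x] \in G) -> ~~ odd #|W| -> P_ok W G.
Proof.
elim: k W G s => // k IH W G s hk sG oG sE evW.
have sW x : x \in W -> s x \in W.
  by move=> xW; apply: (subsetP (oG _ (sE x xW))); rewrite !inE eqxx orbT.
have sx x : x \in W -> x != s x by move=> xW; apply: simple_edge sG (sE x xW).
have sinj x y : (s x == s y) = (x == y) by rewrite (inj_eq perm_inj).
have IHW (v w : 'I_n) G' (s' : {perm 'I_n}) : v \in W -> w \in W -> v != w ->
   simple_graph G' -> onW (W :\ v :\ w) G' ->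
   (forall x, x \in W :\ v :\ w -> [set x; s' x] \in G') -> P_ok (W :\ v :\ w) G'.
  move=> vW wW vw sG' oG' sE'.
  have cW : #|W| = (#|W :\ v :\ w|).+2.
    rewrite (cardsD1 v W) vW (cardsD1 w (W :\ v)) !inE eq_sym vw wW /=.
    by rewrite !add1n.
  apply: (IH _ _ s') => //.
    by move: hk; rewrite cW ltnS => /ltnW.
  by move: evW; rewrite cW /= negbK.
have G0s a b : simple_graph (G0 G a b) by apply: simple_sub sG (sep_sub _ _).
case: (boolP [exists x, (x \in W) && (s (s x) == x)]) =>
   [/existsP [x /andP [xW /eqP ssx]] | /existsPn no2].
  apply: (move1 sG oG (sE x xW) (sx x xW) xW (sW x xW)).
  apply: (IHW _ _ _ s xW (sW x xW) (sx x xW) (G0s _ _) (@onW_G0 W G x (s x) oG)).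
  move=> y; rewrite inW2 => /and3P [ysx yx yW].
  apply: inG0; rewrite ?sE //; try neq.
    by rewrite -{1}ssx sinj; neq.
  by rewrite sinj; neq.
have no2' x : x \in W -> s (s x) != x by move=> xW; move: (no2 x); rewrite xW.
case: (boolP [exists u, (u \in W) && (s (s (s u)) != u)]) =>
   [/existsP [u /andP [uW s3u]] | /existsPn no3].
  have [v e_v] : {v | s u = v} by exists (s u).
  have [w e_w] : {w | s v = w} by exists (s v).
  have [z e_z] : {z | s w = z} by exists (s w).
  have vW : v \in W by rewrite -e_v sW.
  have wW : w \in W by rewrite -e_w sW.
  have zW : z \in W by rewrite -e_z sW.
  have uv : u != v by rewrite -e_v sx.
  have vw : v != w by rewrite -e_w sx.
  have wz : w != z by rewrite -e_z sx.
  have uw : u != w by have := no2' u uW; rewrite e_v e_w eq_sym.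
  have vz : v != z by have := no2' v vW; rewrite e_w e_z eq_sym.
  have uz : u != z by move: s3u; rewrite e_v e_w e_z eq_sym.
  pose s' := (tperm u w * s)%g.
  have s'u : s' u = z by rewrite permM tpermL e_z.
  have s'y y : y != u -> y != w -> s' y = s y.
    by move=> yu yw; rewrite permM tpermD // eq_sym.
  have uW' : u \in W :\ v :\ w by rewrite inW2 uw uv uW.
  have zW' : z \in W :\ v :\ w by rewrite inW2 eq_sym wz eq_sym vz zW.
  have memy y : y \in W :\ v :\ w -> y != u -> [set y; s y] \in G0 G v w.
    rewrite inW2 => /and3P [yw yv yW] yu.
    apply: inG0; rewrite ?sE //; try neq.
      by rewrite -e_v sinj; neq.
    by rewrite -e_w sinj; neq.
  case: (boolP ([set u; z] \in G)) => uzG.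
    have uzG0 : [set u; z] \in G0 G v w by apply: inG0; try neq.
    apply: (move1 sG oG _ vw vW wW); first by rewrite -e_w sE.
    apply: (IHW _ _ _ s' vW wW vw (G0s _ _) (@onW_G0 W G v w oG)).
    move=> y yW; case: (eqVneq y u) => [-> | yu]; first by rewrite s'u.
    rewrite s'y //; first exact: memy.
    by move: yW; rewrite inW2 => /and3P [].
  apply: (move2 sG oG _ _ vw vW wW uW' zW' uz uzG); first by rewrite -e_v sE.
    by rewrite -e_z sE.
  apply: (IHW _ _ _ s' vW wW vw).
  - by apply: simpleU; [exact: simple_pair | exact: G0s].
  - move=> e; rewrite in_setU1 => /orP [/eqP -> | ]; first exact: subW2_pair.
    exact: onW_G0.
  - move=> y yW; case: (eqVneq y u) => [-> | yu]; first by rewrite s'u setU11.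
    rewrite s'y; first by rewrite in_setU1 memy ?orbT.
      by [].
    by move: yW; rewrite inW2 => /and3P [].
have no3' x : x \in W -> s (s (s x)) = x by move=> xW; move: (no3 x); rewrite xW negbK => /eqP.
case: (set_0Vmem W) => [W0 | [u uW]].
  exists set0; split.
  - by apply/forall_inP=> e; rewrite inE.
  - by move=> e; rewrite inE.
  - by move=> x; rewrite W0 inE.
have [v e_v] : {v | s u = v} by exists (s u).
have [w e_w] : {w | s v = w} by exists (s v).
have e_wu : s w = u by rewrite -e_w -e_v no3'.
have vW : v \in W by rewrite -e_v sW.
have wW : w \in W by rewrite -e_w sW.
have uv : u != v by rewrite -e_v sx.
have vw : v != w by rewrite -e_w sx.
have uw : u != w by have := no2' u uW; rewrite e_v e_w eq_sym.
have cW3 : #|W| = (#|W :\ u :\ v :\ w|).+3.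
  rewrite (cardsD1 u W) uW (cardsD1 v (W :\ u)) (cardsD1 w (W :\ u :\ v)) !inE.
  by rewrite eq_sym uv vW eq_sym vw eq_sym uw wW /= !add1n.
have /card_gt0P [p pW3] : 0 < #|W :\ u :\ v :\ w|.
  by move: evW; rewrite cW3; case: #|_|.
move: pW3; rewrite !inE => /and4P [pw pv pu pW].
have [q e_q] : {q | s p = q} by exists (s p).
have [r e_r] : {r | s q = r} by exists (s q).
have e_rp : s r = p by rewrite -e_r -e_q no3'.
have qW : q \in W by rewrite -e_q sW.
have rW : r \in W by rewrite -e_r sW.
have qu : q != u by rewrite -e_q -e_wu sinj.
have qv : q != v by rewrite -e_q -e_v sinj.
have qw : q != w by rewrite -e_q -e_w sinj.
have ru : r != u by rewrite -e_r -e_wu sinj.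
have rv : r != v by rewrite -e_r -e_v sinj.
have rw : r != w by rewrite -e_r -e_w sinj.
have pq : p != q by rewrite -e_q sx.
have qr : q != r by rewrite -e_r sx.
have pr : p != r by have := no2' p pW; rewrite e_q e_r eq_sym.
have vwG : [set v; w] \in G by rewrite -e_w sE.
have wvG : [set w; v] \in G by rewrite setUC.
have qrG : [set q; r] \in G by rewrite -e_r sE.
have rqG : [set r; q] \in G by rewrite setUC.
have rpG : [set r; p] \in G by rewrite -e_rp sE.
have prG : [set p; r] \in G by rewrite setUC.
have pqG : [set p; q] \in G by rewrite -e_q sE.
have uvG : [set u; v] \in G by rewrite -e_v sE.
have uwG : [set u; w] \in G by rewrite setUC -e_wu sE.
case: (boolP ([set u; p] \in G)) => upG.
  apply: (move1 sG oG upG _ uW pW); first by rewrite eq_sym.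
  pose s' := (tperm w u * tperm r p * s)%g.
  apply: (IHW _ _ _ s' uW pW _ (G0s _ _) (@onW_G0 W G u p oG)); first by rewrite eq_sym.
  move=> y; rewrite inW2 => /and3P [yp yu yW].
  case: (eqVneq y w) => [-> | yw].
    rewrite /s' !permM tpermL tpermD ?e_v; try neq.
    by apply: inG0; try neq.
  case: (eqVneq y r) => [-> | yr].
    rewrite /s' !permM [tperm w u r]tpermD ?tpermL ?e_q; try neq.
    by apply: inG0; try neq.
  rewrite /s' !permM [tperm w u y]tpermD ?[tperm r p y]tpermD; try neq.
  apply: inG0; rewrite ?sE //; try neq.
    by rewrite -e_wu sinj; neq.
  by rewrite -e_rp sinj; neq.
case: (boolP ([set u; q] \in G)) => uqG.
  apply: (move1 sG oG uqG _ uW qW); first by rewrite eq_sym.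
  pose s' := (tperm w u * tperm p q * s)%g.
  apply: (IHW _ _ _ s' uW qW _ (G0s _ _) (@onW_G0 W G u q oG)); first by rewrite eq_sym.
  move=> y; rewrite inW2 => /and3P [yq yu yW].
  case: (eqVneq y w) => [-> | yw].
    rewrite /s' !permM tpermL tpermD ?e_v; try neq.
    by apply: inG0; try neq.
  case: (eqVneq y p) => [-> | yp].
    rewrite /s' !permM [tperm w u p]tpermD ?tpermL ?e_r; try neq.
    by apply: inG0; try neq.
  rewrite /s' !permM [tperm w u y]tpermD ?[tperm p q y]tpermD; try neq.
  apply: inG0; rewrite ?sE //; try neq.
    by rewrite -e_wu sinj; neq.
  by rewrite -e_q sinj; neq.
have uW' : u \in W :\ v :\ w by rewrite inW2 uw uv uW.
have pW' : p \in W :\ v :\ w by rewrite inW2 pw pv pW.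
have qW' : q \in W :\ v :\ w by rewrite inW2 qw qv qW.
have up : u != p by rewrite eq_sym.
have uq : u != q by rewrite eq_sym.
apply: (move3 sG oG uvG uwG pqG vw vW wW uW' pW' qW' up uq pq upG uqG).
pose s' := (tperm u w * tperm p w * s)%g.
apply: (IHW _ _ _ s' vW wW vw).
- apply: simpleU; first exact: simple_pair.
  apply: simpleU; first exact: simple_pair.
  exact: simple_sub sG (subset_trans (subsetDl _ _) (sep_sub _ _)).
- move=> e; rewrite !in_setU1 => /orP [/eqP -> | /orP [/eqP -> | ]].
  + exact: subW2_pair.
  + exact: subW2_pair.
  + by rewrite in_setD1 => /andP [_]; apply: onW_G0.
- move=> y yW'; have := yW'; rewrite inW2 => /and3P [yw yv yW].
  case: (eqVneq y p) => [-> | yp].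
    rewrite /s' !permM [tperm u w p]tpermD ?tpermL ?e_wu; try neq.
    have -> : [set p; u] = [set u; p] by rewrite setUC.
    by rewrite setU11.
  case: (eqVneq y u) => [-> | yu].
    rewrite /s' !permM tpermL tpermR e_q.
    by rewrite !in_setU1 eqxx orbT.
  rewrite /s' !permM [tperm u w y]tpermD ?[tperm p w y]tpermD; try neq.
  rewrite !in_setU1; apply/orP; right; apply/orP; right.
  rewrite in_setD1; apply/andP; split.
    case: (eqVneq y q) => [-> | yq].
      by rewrite e_r setUC [[set p; q]]setUC; apply: pair_neq; neq.
    by apply: pair_neq; neq.
  apply: inG0; rewrite ?sE //; try neq.
    by rewrite -e_v sinj; neq.
  by rewrite -e_w sinj; neq.
Qed.

End Reduce.

Section Real.
Variable R : realType.
Variable n : nat.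
Implicit Types (E G H M : {set {set 'I_n}}).
Local Open Scope ring_scope.

Lemma bigmin_le (I : finType) (P : pred I) (F : I -> nat) k j : P j ->
  (\big[minn/k]_(i | P i) F i <= F j)%N.
Proof.
move=> Pj; rewrite unlock; move: (mem_index_enum j); elim: (index_enum I) => //= i r IHr.
rewrite inE; case: (eqVneq j i) => [<- _ | _ /= jr].
  by rewrite Pj geq_minl.
case: (P i); last exact: IHr.
by apply: leq_trans (geq_minr _ _) (IHr jr).
Qed.

Lemma mu_pos E : (0 < mu R E)%N <-> ~ (tau_star R E < n%:R / 2).
Proof.
split.
- move=> h lt; move: h; rewrite /mu.
  have := @bigmin_le _ (fun E' : {set {set 'I_n}} => (E' \subset E) && (tau_star R (E :\: E') < n%:R / 2))
       (fun E' => #|E'|) #|E|.+1 set0.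
  rewrite sub0set setD0 lt cards0 => /(_ isT); rewrite leqn0 => /eqP ->.
  by [].
- move=> nlt; rewrite /mu; apply: (big_ind (fun m => 0 < m)%N) => //.
    by move=> a b; rewrite leq_min => -> ->.
  move=> E' /andP [_ lt]; rewrite card_gt0; apply/negP=> /eqP E0.
  by apply: nlt; move: lt; rewrite E0 setD0.
Qed.

Lemma mu_bar_pos (d : 'I_n -> nat) :
  (0 < mu_bar R d)%N <-> exists E, realizes E d /\ (0 < mu R E)%N.
Proof.
split.
- move=> h; case: (boolP [exists E, realizes E d && (0 < mu R E)%N]).
    by move=> /existsP [E /andP [? ?]]; exists E.
  move=> /existsPn hn; move: h; rewrite /mu_bar big1 // => E rE.
  by apply/eqP; rewrite -leqn0 leqNgt; move: (hn E); rewrite rE.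
- case=> E [rE muE]; apply: leq_trans muE _.
  rewrite /mu_bar; apply: (@leq_bigmax_cond _ (fun E => realizes E d) (fun E => mu R E) E rE).
Qed.

Lemma tau_le E f : frac_cover E f -> tau_star R E <= \sum_(v < n) f v.
Proof.
move=> cf; have := @ge_inf R [set s : R | exists f : 'I_n -> R,
   frac_cover E f /\ s = \sum_(v < n) f v].
apply.
  exists 0 => y [g [[g0 _] ->]]; exact: sumr_ge0.
by exists f.
Qed.

Lemma tau_ge E (b : R) : (forall f, frac_cover E f -> b <= \sum_(v < n) f v) ->
  b <= tau_star R E.
Proof.
move=> h; apply: lb_le_inf.
  exists (\sum_(v < n) (fun _ => 1 : R) v); exists (fun _ => 1); split => //.
  split=> [v|u v _]; first exact: ler01.
  by rewrite -[1 in X in X <= _]addr0 lerD ?ler01.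
by move=> y [f [cf ->]]; exact: h.
Qed.

Lemma sum_ind (T : finType) (A : {set T}) (P : pred T) :
  \sum_(x in A) ((P x)%:R : R) = #|[set x in A | P x]|%:R.
Proof.
rewrite -sumr_const big_mkcond [RHS]big_mkcond /=; apply: eq_bigr => x _.
by rewrite inE; case: (x \in A); case: (P x).
Qed.

Lemma sum_indT (A : {set 'I_n}) : \sum_(x < n) ((x \in A)%:R : R) = #|A|%:R.
Proof.
rewrite -sumr_const [RHS]big_mkcond /=; apply: eq_bigr => x _; by case: (x \in A).
Qed.

Lemma double_count M (f : 'I_n -> R) : (forall v, deg M v = 1%N) ->
  \sum_(v < n) f v = \sum_(e in M) \sum_(v in e) f v.
Proof.
move=> dM.
transitivity (\sum_(v < n) \sum_(e in M) ((v \in e)%:R * f v)).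
  apply: eq_bigr => v _; rewrite -big_distrl /= sum_ind.
  by have := dM v; rewrite /deg => ->; rewrite mul1r.
rewrite exchange_big /=; apply: eq_bigr => e eM.
rewrite [RHS]big_mkcond /=; apply: eq_bigr => v _.
by case: (v \in e); rewrite ?mul1r ?mul0r.
Qed.

Lemma pm_bound G M (f : 'I_n -> R) : simple_graph M -> M \subset G -> (forall v, deg M v = 1%N) ->
  frac_cover G f -> n%:R / 2 <= \sum_(v < n) f v.
Proof.
move=> sM MG dM [f0 cf].
have cM : (n%:R : R) = 2 * #|M|%:R.
  have := double_count (fun _ => 1 : R) dM.
  rewrite sumr_const card_ord => ->.
  rewrite (eq_bigr (fun _ => 2)); last first.
    move=> e eM; rewrite sumr_const.
    by have /forall_inP := sM; move/(_ e eM)/eqP ->.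
  by rewrite sumr_const mulr_natr.
rewrite cM mulrC mulKf ?pnatr_eq0 // (double_count f dM).
rewrite -sumr_const; apply: ler_sum => e eM.
have /forall_inP := sM; move/(_ e eM)/cards2P=> [a [b [ab ee]]].
rewrite ee big_setU1 ?inE // big_set1; apply: cf.
by rewrite -ee (subsetP MG).
Qed.

Lemma hall_cond G : ~ (tau_star R G < n%:R / 2) ->
  forall X : {set 'I_n}, (#|X| <= #|\bigcup_(x in X) nb G x|)%N.
Proof.
move=> nlt X; rewrite leqNgt; apply/negP => lt; apply: nlt.
set NX := \bigcup_(x in X) nb G x.
pose f v : R := (1 + (v \in NX)%:R - (v \in X)%:R) / 2.
have NXP u v : [set u; v] \in G -> u \in X -> v \in NX.
  by move=> uvG uX; apply/bigcupP; exists u; rewrite // inE.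
apply: le_lt_trans (@tau_le G f _) _.
  split.
    move=> v; rewrite /f; case: (v \in NX); case: (v \in X) => /=; lra.
  move=> u v uvG; have h1 := NXP _ _ uvG; have h2 := NXP v u; rewrite setUC in h2.
  move: (h2 uvG) h1; rewrite /f.
  case: (v \in NX); case: (v \in X); case: (u \in NX); case: (u \in X) => //= H2 H1;
    try (by move: (H1 isT)); try (by move: (H2 isT)); lra.
rewrite /f -mulr_suml big_split /= sumrN big_split /= sumr_const card_ord !sum_indT.
have : (#|NX|%:R : R) < #|X|%:R by rewrite ltr_nat.
lra.
Qed.

End Real.

Theorem corollary21 (R : realType) (n : nat) (d : 'I_n -> nat) :
  graphical d -> ~~ odd n ->
  (0 < mu_bar R d)%N <-> graphicalZ (fun v => ((d v)%:Z - 1)%R).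
Proof.
move=> [G0 rG0] ev; rewrite mu_bar_pos; split.
- case=> E [rE /mu_pos nlt].
  move: rE => /andP [sE /forallP dE].
  have [f [finj fN]] := hall (hall_cond nlt).
  pose s := perm finj.
  have := @reduce_aux n (#|[set: 'I_n]|.+1) [set: 'I_n] E s (ltnSn _) sE _ _ _.
  case.
  + by move=> e _; apply: subsetT.
  + by move=> x _; rewrite permE; move: (fN x); rewrite inE.
  + by rewrite cardsT card_ord.
  move=> H [sH _ dH]; split.
    move=> v; have := dH v (in_setT v); rewrite (eqP (dE v)) => <-.
    by rewrite -addn1 PoszD addrK.
  exists H; apply/andP; split => //; apply/forallP => v.
  by rewrite -(eqP (dE v)) -(dH v (in_setT v)) -addn1 PoszD addrK /=.
- case=> [hpos [H0 /andP [sH0 /forallP dH0]]].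
  move: rG0 => /andP [sG0 /forallP dG0].
  have dpos v : (0 < d v)%N.
    by move: (hpos v); rewrite subr_ge0 lez_nat.
  have dG0H0 v : deg G0 v = (deg H0 v).+1.
    rewrite (eqP (dG0 v)) (eqP (dH0 v)).
    have -> : ((d v)%:Z - 1)%R = (d v).-1 by rewrite -{1}(prednK (dpos v)) -addn1 PoszD addrK.
    by rewrite /= prednK.
  have [G' [H' [sG' sH' dG' dH' sub]]] :=
     @kundu_aux n (#|H0 :\: G0|.+1) G0 H0 (ltnSn _) sG0 sH0 dG0H0.
  exists G'; split.
    by apply/andP; split => //; apply/forallP => v; rewrite dG'.
  apply/mu_pos => lt.
  have dM v : deg (G' :\: H') v = 1%N.
    have := deg_GH G' H' v; rewrite (setIidPr sub) dG' dH' dG0H0; lia.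
  have := @tau_ge R n G' (n%:R / 2) (fun f cf => pm_bound (simple_sub sG' (subsetDl _ _))
            (subsetDl _ _) dM cf).
  by rewrite leNgt lt.
Qed.
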